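(* Let $d\ge1$, let $\{1,\dots,d\}$ be partitioned into $\mathcal{D}$ and $\mathcal{U}$ with $|\mathcal{D}|=1$, let $\mathbb{C}$ be the contribution matrix of a causal graph, $c\in\mathbb{R}^d$ with $c_f>0$, $\alpha>0$, $p\in[1,3]$, and $\beta\in(0,1]$. Then the set $$\mathcal{H}=\{h_0\in\mathbb{R}^d:\ \mathbb{C}h_0\ge0\ \text{and every optimal solution of } \min_{e\ge0}\Big(\sum_f c_fe_f^{\,p}\Big)^{1/p}\ \text{s.t.}\ (\mathbb{C}h_0)^\top e\ge\alpha\ \text{is }\beta\text{-desirable}\}$$ of $\beta$-desirable classifiers is convex.
   Context: A causal graph is a weighted directed acyclic graph on $\{1,\dots,d\}$ with adjacency matrix $A$ ($A_{ij}$ the weight of edge $i\to j$, $0$ if absent); its contribution matrix is $\mathbb{C}=\sum_{k=0}^{d}A^k$. $\mathcal{D}$ is the set of desirable features, $\mathcal{U}$ the set of undesirable features. An effort profile $e$ is $\beta$-desirable if $\|e_{\mathcal{D}}\|_2\ge\beta\|e\|_2$, where $e_{\mathcal{D}}$ is the restriction of $e$ to coordinates in $\mathcal{D}$. *)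

(* Defs.v *)
From HB Require Import structures.
From mathcomp Require Import all_boot all_order all_algebra.
From mathcomp Require Import reals exp.
Set Implicit Arguments.
Unset Strict Implicit.
Unset Printing Implicit Defensive.
Import Order.TTheory GRing.Theory Num.Theory.
Local Open Scope ring_scope.

Section Defs.
Variables (R : realType) (d : nat).

Definition is_dag (A : 'M[R]_d) : Prop :=
  forall (x : 'I_d) (s : seq 'I_d),
    path (fun i j => A i j != 0) x s -> last x s = x -> s = [::].

Definition contribution (A : 'M[R]_d) : 'M[R]_d := \sum_(k < d.+1) A ^+ k.

Definition cost (c : 'cV[R]_d) (p : R) (e : 'cV[R]_d) : R :=
  powR (\sum_(f < d) c f 0 * powR (e f 0) p) p^-1.

Definition feasible (C : 'M[R]_d) (h0 : 'cV[R]_d) (alpha : R) (e : 'cV[R]_d) : Prop :=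
  (forall f, 0 <= e f 0) /\ alpha <= \sum_(f < d) (C *m h0) f 0 * e f 0.

Definition optimal (C : 'M[R]_d) (c : 'cV[R]_d) (p alpha : R) (h0 e : 'cV[R]_d) : Prop :=
  feasible C h0 alpha e /\
  forall e', feasible C h0 alpha e' -> cost c p e <= cost c p e'.

Definition beta_desirable (D : {set 'I_d}) (beta : R) (e : 'cV[R]_d) : Prop :=
  beta * Num.sqrt (\sum_(f < d) e f 0 ^+ 2) <= Num.sqrt (\sum_(f in D) e f 0 ^+ 2).

Definition desirable_classifiers (C : 'M[R]_d) (D : {set 'I_d}) (c : 'cV[R]_d)
    (p alpha beta : R) (h0 : 'cV[R]_d) : Prop :=
  (forall f, 0 <= (C *m h0) f 0) /\
  forall e, optimal C c p alpha h0 e -> beta_desirable D beta e.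

End Defs.

(* Main.v *)
Require Import Defs.
From HB Require Import structures.
From mathcomp Require Import all_boot all_order all_algebra.
From mathcomp Require Import reals exp.
From mathcomp Require Import ring lra.
Import Order.TTheory GRing.Theory Num.Theory.
Local Open Scope ring_scope.

Lemma tangent {R : realType} (p a t : R) : 1 <= p -> 0 <= a -> 0 <= t ->
  p * powR a (p - 1) * t <= powR t p + (p - 1) * powR a p.
Proof.
move=> p1 a0 t0.
have [->|p1'] := eqVneq p 1.
  by rewrite subrr powRr0 powRr1 // mul0r addr0 !mul1r.
have pgt1 : 1 < p by rewrite lt_neqAle eq_sym p1' p1.
have p0 : 0 < p by apply: lt_trans pgt1.
have pm1 : 0 < p - 1 by rewrite subr_gt0.
set q := p / (p - 1).
have q0 : 0 < q by rewrite divr_gt0.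
have qi : q^-1 = (p - 1) / p by rewrite /q invfM invrK mulrC.
have pq : p^-1 + q^-1 = 1.
  by rewrite qi mulrBl divff ?gt_eqF // mul1r addrC subrK.
have := conjugate_powR t0 (powR_ge0 a (p - 1)) p0 q0 pq.
rewrite -powRrM /q mulrCA divff ?gt_eqF // mulr1.
move: (powR a (p - 1)) (powR t p) (powR a p) => A T P h.
have e : T / p + P / (p / (p - 1)) = (T + (p - 1) * P) / p.
  by field; rewrite ?gt_eqF.
rewrite e in h.
have := ler_wpM2l (ltW p0) h.
have -> : p * ((T + (p - 1) * P) / p) = T + (p - 1) * P by field; rewrite gt_eqF.
by rewrite -mulrA [A * t]mulrC.
Qed.

Lemma tangent_eq {R : realType} (p a t : R) : 1 < p -> 0 <= a -> 0 <= t ->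
  p * powR a (p - 1) * t = powR t p + (p - 1) * powR a p -> t = a.
Proof.
move=> p1 a0 t0 E.
have p1' : 1 <= p by apply: ltW.
have pm1 : 0 < p - 1 by rewrite subr_gt0.
have p0 : 0 < p by apply: lt_trans p1.
set v := (a + t) / 2.
have v0 : 0 <= v by rewrite divr_ge0 // addr_ge0.
have T1 := tangent p a v p1' a0 v0.
have T2 := tangent p v a p1' v0 a0.
have T3 := tangent p v t p1' v0 t0.
have Pa := mulr_powRB1 a0 p0.
have Pv := mulr_powRB1 v0 p0.
have hv : v * 2 = a + t by rewrite /v mulfVK // pnatr_eq0.
rewrite -Pa -Pv in T1 T2 T3 E.
set Ga := powR a (p - 1) in T1 T2 T3 E *.
set Gv := powR v (p - 1) in T1 T2 T3 E *.
set Pt := powR t p in T1 T2 T3 E *.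
have h1 : p * Ga * (a + t) = 2 * (p * Ga * v) by rewrite -hv; ring.
have h2 : p * Gv * (a + t) = 2 * (p * Gv * v) by rewrite -hv; ring.
have X2 : p * Gv * a = a * Ga + (p - 1) * (v * Gv) by lra.
have X3 : p * Gv * t = Pt + (p - 1) * (v * Gv) by lra.
have : p * ((t - a) * (Gv - Ga)) = 0 by lra.
move/eqP; rewrite !mulf_eq0 (gt_eqF p0) /= !subr_eq0 => /orP[/eqP //|/eqP hG].
have va : v = a.
  by apply: (powR_injective pm1); rewrite ?nnegrE.
lra.
Qed.

Definition S {R : realType} {d : nat} (c : 'cV[R]_d) (p : R) (e : 'cV[R]_d) : R :=
  \sum_(f < d) c f 0 * powR (e f 0) p.

Lemma S_ge0 {R : realType} {d : nat} (c : 'cV[R]_d) p e :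
  (forall f, 0 < c f 0) -> 0 <= S c p e.
Proof.
by move=> c0; apply: sumr_ge0 => f _; apply: mulr_ge0; [exact: ltW | exact: powR_ge0].
Qed.

Lemma cost_le {R : realType} {d : nat} (c : 'cV[R]_d) p e e' :
  0 < p -> (forall f, 0 < c f 0) ->
  (cost c p e <= cost c p e') = (S c p e <= S c p e').
Proof.
move=> p0 c0; rewrite /cost -/(S c p e) -/(S c p e').
have h0 := S_ge0 c p e c0; have h0' := S_ge0 c p e' c0.
apply/idP/idP => h; last by apply: ge0_ler_powR => //; rewrite ?nnegrE ?invr_ge0 ?ltW.
rewrite leNgt; apply/negP => h'.
have := gt0_ltr_powR (r := p^-1) _ _ _ h'.
have ip : 0 < p^-1 by rewrite invr_gt0.
by move=> /(_ ip); rewrite !nnegrE => /(_ h0' h0); rewrite ltNge h.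
Qed.

Lemma opt_unique {R : realType} {d : nat} (C : 'M[R]_d) (h0 : 'cV[R]_d)
  (c : 'cV[R]_d) (p alpha mu : R) (u : 'cV[R]_d) :
  1 < p -> 0 < mu -> (forall f, 0 < c f 0) ->
  (forall f, 0 <= u f 0) ->
  (forall f, c f 0 * powR (u f 0) (p - 1) = mu * (C *m h0) f 0) ->
  \sum_(f < d) (C *m h0) f 0 * u f 0 = alpha ->
  forall e, feasible C h0 alpha e ->
    S c p u <= S c p e /\ (S c p e <= S c p u -> e = u).
Proof.
move=> p1 mu0 c0 u0 hu hsum e [e0 he].
have p0 : 0 < p by apply: lt_trans p1.
set w := fun f => (C *m h0) f 0.
set T := fun f : 'I_d => c f 0 * (powR (e f 0) p + (p - 1) * powR (u f 0) p
                           - p * powR (u f 0) (p - 1) * e f 0).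
have T0 : forall f, 0 <= T f.
  move=> f; rewrite /T; apply: mulr_ge0; first exact: ltW.
  rewrite subr_ge0; exact: tangent (ltW p1) (u0 f) (e0 f).
set X := \sum_(f < d) c f 0 * powR (u f 0) (p - 1) * e f 0.
have hX : X = mu * \sum_(f < d) w f * e f 0.
  by rewrite /X mulr_sumr; apply: eq_bigr => f _; rewrite hu mulrA.
have hSu : S c p u = mu * alpha.
  rewrite -hsum /S mulr_sumr; apply: eq_bigr => f _.
  by rewrite -(mulr_powRB1 (u0 f) p0) mulrCA hu mulrA [_ * u f 0]mulrC.
have sumT : \sum_f T f = S c p e + (p - 1) * S c p u - p * X.
  rewrite /T /S /X !mulr_sumr -sumrN -!big_split /=; apply: eq_bigr => f _.
  ring.
have XS : S c p u <= X by rewrite hX hSu ler_pM2l.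
have ST : 0 <= \sum_f T f by apply: sumr_ge0 => f _.
split; first by nra.
move=> hle.
have sT0 : \sum_f T f = 0 by apply/eqP; rewrite eq_le ST andbT; nra.
apply/matrixP => f j; rewrite [j]ord1.
have := @psumr_eq0P _ _ xpredT T (fun i _ => T0 i) sT0 f isT.
rewrite /T => /eqP; rewrite mulf_eq0 gt_eqF //= subr_eq0 => /eqP E.
apply: (tangent_eq _ _ _ p1 (u0 f) (e0 f)); rewrite -E; ring.
Qed.

Definition Good {R : realType} {d : nat} (beta s : R) (k : 'I_d) (x : 'I_d -> R) :=
  beta ^+ 2 * \sum_f powR (x f) s <= powR (x k) s.

Lemma powR_div {R : realType} (x Y s : R) : 0 <= x -> 0 < Y ->
  powR (x / Y) s = powR x s / powR Y s.
Proof.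
move=> x0 Y0; rewrite powRM //; last by rewrite invr_ge0 ltW.
congr (_ * _).
by rewrite -powR_inv1 ?ltW // -powRrM mulN1r powRN.
Qed.

Lemma perspective {R : realType} (s A B Y1 Y2 : R) : 1 <= s -> 0 <= A -> 0 <= B ->
  0 < Y1 -> 0 < Y2 ->
  (Y1 + Y2) * powR ((A + B) / (Y1 + Y2)) s <=
  Y1 * powR (A / Y1) s + Y2 * powR (B / Y2) s.
Proof.
move=> s1 A0 B0 Y10 Y20.
have s0 : 0 < s by apply: lt_le_trans s1.
set Y := Y1 + Y2.
have Y0 : 0 < Y by rewrite addr_gt0.
set m := (A + B) / Y.
have m0 : 0 <= m by apply: divr_ge0; [exact: addr_ge0 | exact: ltW].
have z10 : 0 <= A / Y1 by apply: divr_ge0 => //; exact: ltW.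
have z20 : 0 <= B / Y2 by apply: divr_ge0 => //; exact: ltW.
have T1 := tangent s m (A / Y1) s1 m0 z10.
have T2 := tangent s m (B / Y2) s1 m0 z20.
have hm := mulr_powRB1 m0 s0.
have hA : Y1 * (A / Y1) = A by rewrite mulrC mulfVK ?gt_eqF.
have hB : Y2 * (B / Y2) = B by rewrite mulrC mulfVK ?gt_eqF.
have hY : m * Y = A + B by rewrite /m mulfVK ?gt_eqF.
set G := powR m (s - 1) in T1 T2 hm.
set P := powR m s in T1 T2 hm *.
set P1 := powR (A / Y1) s in T1 *.
set P2 := powR (B / Y2) s in T2 *.
have T1' := ler_wpM2l (ltW Y10) T1.
have T2' := ler_wpM2l (ltW Y20) T2.
have e1 : Y1 * (s * G * (A / Y1)) = s * G * A by rewrite mulrCA hA.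
have e2 : Y2 * (s * G * (B / Y2)) = s * G * B by rewrite mulrCA hB.
have e3 : s * G * A + s * G * B = s * Y * P.
  rewrite -hm; have -> : s * G * A + s * G * B = s * G * (m * Y) by rewrite hY; ring.
  ring.
rewrite e1 in T1'; rewrite e2 in T2'.
rewrite /Y in e3 *; lra.
Qed.

Lemma good_norm {R : realType} {d : nat} (beta s : R) (k : 'I_d) (y : 'I_d -> R) :
  (forall f, 0 <= y f) -> 0 < y k ->
  Good beta s k y <->
  beta ^+ 2 * \sum_f (y k * powR (y f / y k) s) <= y k.
Proof.
move=> y0 Y0; set Y := y k.
have PY : 0 < powR Y s by apply: powR_gt0.
have fac : 0 < Y / powR Y s by rewrite divr_gt0.
have -> : \sum_f (Y * powR (y f / Y) s) = Y / powR Y s * \sum_f powR (y f) s.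
  rewrite mulr_sumr; apply: eq_bigr => f _; rewrite powR_div //.
  by ring.
have e : Y / powR Y s * powR Y s = Y by rewrite mulfVK ?gt_eqF.
by rewrite /Good -/Y -(ler_pM2l fac) e mulrCA.
Qed.

Lemma good_scale {R : realType} {d : nat} (beta s a : R) (k : 'I_d) (x : 'I_d -> R) :
  0 <= a -> (forall f, 0 <= x f) -> Good beta s k x -> Good beta s k (fun f => a * x f).
Proof.
move=> a0 x0; rewrite /Good.
have -> : \sum_f powR (a * x f) s = powR a s * \sum_f powR (x f) s.
  by rewrite mulr_sumr; apply: eq_bigr => f _; rewrite powRM.
rewrite powRM // mulrCA => h; apply: ler_wpM2l => //; exact: powR_ge0.
Qed.

Lemma good_zero {R : realType} {d : nat} (beta s : R) (k : 'I_d) (y : 'I_d -> R) :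
  0 < beta -> 0 < s -> (forall f, 0 <= y f) -> y k = 0 -> Good beta s k y ->
  forall f, y f = 0.
Proof.
move=> b0 s0 y0 yk; rewrite /Good yk powR0 ?gt_eqF // => h f.
have hs : 0 <= \sum_f powR (y f) s by apply: sumr_ge0 => i _; exact: powR_ge0.
have b2 : 0 < beta ^+ 2 by rewrite exprn_gt0.
have s0' : \sum_f powR (y f) s = 0.
  apply/eqP; rewrite eq_le hs andbT -(ler_pM2l b2) mulr0 //.
have := @psumr_eq0P _ _ xpredT (fun f => powR (y f) s) (fun i _ => powR_ge0 _ _) s0' f isT.
exact: powR_eq0_eq0.
Qed.

Lemma good_add {R : realType} {d : nat} (beta s : R) (k : 'I_d) (y1 y2 : 'I_d -> R) :
  0 < beta -> 1 <= s -> (forall f, 0 <= y1 f) -> (forall f, 0 <= y2 f) ->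
  Good beta s k y1 -> Good beta s k y2 -> Good beta s k (fun f => y1 f + y2 f).
Proof.
move=> b0 s1 y10 y20 g1 g2.
have s0 : 0 < s by apply: lt_le_trans s1.
have [z1|Y1] := eqVneq (y1 k) 0.
  have := good_zero _ _ _ _ b0 s0 y10 z1 g1 => h.
  by rewrite /Good; under eq_bigr => f _ do rewrite h add0r; rewrite h add0r.
have [z2|Y2] := eqVneq (y2 k) 0.
  have := good_zero _ _ _ _ b0 s0 y20 z2 g2 => h.
  by rewrite /Good; under eq_bigr => f _ do rewrite h addr0; rewrite h addr0.
have Y10 : 0 < y1 k by rewrite lt_neqAle eq_sym Y1 y10.
have Y20 : 0 < y2 k by rewrite lt_neqAle eq_sym Y2 y20.
have y0 : forall f, 0 <= y1 f + y2 f by move=> f; apply: addr_ge0.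
apply/(good_norm _ _ _ _ y0); first by apply: addr_gt0.
move/(good_norm _ _ _ _ y10): g1 => /(_ Y10) g1.
move/(good_norm _ _ _ _ y20): g2 => /(_ Y20) g2.
have b2 : 0 <= beta ^+ 2 by rewrite exprn_ge0 // ltW.
apply: le_trans (lerD g1 g2).
rewrite -mulrDr -big_split /=; apply: ler_wpM2l => //.
apply: ler_sum => f _; exact: perspective.
Qed.

Lemma good_conv {R : realType} {d : nat} (beta s a b : R) (k : 'I_d) (x1 x2 : 'I_d -> R) :
  0 < beta -> 1 <= s -> 0 <= a -> 0 <= b ->
  (forall f, 0 <= x1 f) -> (forall f, 0 <= x2 f) ->
  Good beta s k x1 -> Good beta s k x2 -> Good beta s k (fun f => a * x1 f + b * x2 f).
Proof.
move=> b0 s1 a0 bb0 x10 x20 g1 g2.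
apply: good_add => //.
- by move=> f; apply: mulr_ge0.
- by move=> f; apply: mulr_ge0.
- exact: good_scale.
- exact: good_scale.
Qed.

Lemma desirable_iff {R : realType} {d : nat} (beta : R) (k : 'I_d) (u : 'cV[R]_d) :
  0 < beta ->
  beta_desirable [set k] beta u <-> beta ^+ 2 * \sum_f u f 0 ^+ 2 <= u k 0 ^+ 2.
Proof.
move=> b0; rewrite /beta_desirable big_set1.
have hs : 0 <= \sum_f u f 0 ^+ 2 by apply: sumr_ge0 => f _; exact: sqr_ge0.
have eb : beta * Num.sqrt (\sum_f u f 0 ^+ 2) = Num.sqrt (beta ^+ 2 * \sum_f u f 0 ^+ 2).
  by rewrite sqrtrM ?sqr_ge0 // sqrtr_sqr ger0_norm // ltW.
rewrite eb.
by rewrite ler_sqrt ?sqr_ge0.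
Qed.

Lemma sq_powR {R : realType} (y q : R) : 0 <= y -> powR y q ^+ 2 = powR y (q * 2).
Proof. by move=> y0; rewrite -powR_mulrn ?powR_ge0 // -powRrM. Qed.

Lemma candidate {R : realType} {d : nat} (C : 'M[R]_d) (h c : 'cV[R]_d) (p alpha : R) (k : 'I_d) :
  1 < p -> 0 < alpha -> (forall f, 0 < c f 0) -> (forall f, 0 <= (C *m h) f 0) ->
  (exists g, (C *m h) g 0 != 0) ->
  exists u : 'cV[R]_d, exists mu : R,
   [/\ 0 < mu, (forall f, 0 <= u f 0),
       (forall f, c f 0 * powR (u f 0) (p - 1) = mu * (C *m h) f 0),
       \sum_f (C *m h) f 0 * u f 0 = alpha &
       forall beta, 0 < beta -> (beta_desirable [set k] beta u <->
          Good beta ((p - 1)^-1 * 2) k (fun f => (C *m h) f 0 / c f 0))].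
Proof.
move=> p1 a0 c0 w0 [g wg].
pose w := fun f => (C *m h) f 0.
pose x := fun f => w f / c f 0.
have x0 : forall f, 0 <= x f by move=> f; apply: divr_ge0; [exact: w0 | exact: ltW].
pose q := (p - 1)^-1.
have pm1 : 0 < p - 1 by rewrite subr_gt0.
pose Z := \sum_f w f * powR (x f) q.
have wg0 : 0 < w g by rewrite lt_neqAle eq_sym wg; exact: w0.
have xg0 : 0 < x g by apply: divr_gt0.
have Z0 : 0 < Z.
  rewrite /Z (bigD1 g) //=.
  have : 0 <= \sum_(i < d | i != g) w i * powR (x i) q.
    by apply: sumr_ge0 => i _; apply: mulr_ge0; [exact: w0 | exact: powR_ge0].
  have : 0 < w g * powR (x g) q by apply: mulr_gt0 => //; exact: powR_gt0.
  lra.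
pose t := alpha / Z.
have t0 : 0 < t by apply: divr_gt0.
exists (\col_f (t * powR (x f) q)), (powR t (p - 1)).
split.
- exact: powR_gt0.
- by move=> f; rewrite mxE; apply: mulr_ge0; [exact: ltW | exact: powR_ge0].
- move=> f; rewrite mxE powRM ?powR_ge0 ?ltW // -powRrM mulVf ?gt_eqF // powRr1 //.
  rewrite /x /w; field; rewrite gt_eqF //.
- under eq_bigr => f _ do rewrite [X in _ * X]mxE.
  rewrite /t.
  have -> : \sum_f (C *m h) f 0 * (alpha / Z * powR (x f) q) = alpha / Z * Z.
    by rewrite /Z /w mulr_sumr; apply: eq_bigr => f _ /=; ring.
  by rewrite mulfVK // gt_eqF.
- move=> beta b0; rewrite desirable_iff //.
  under eq_bigr => f _ do rewrite mxE exprMn sq_powR //.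

  have uk : (\col_f (t * powR (x f) q)) k 0 ^+ 2 = t ^+ 2 * powR (x k) (q * 2).
    by rewrite mxE exprMn sq_powR.
  rewrite uk -mulr_sumr mulrCA ler_pM2l ?exprn_gt0 //.
Qed.

Lemma all0_or {R : realType} {d : nat} (w : 'I_d -> R) :
  (forall f, w f = 0) \/ (exists g, w g != 0).
Proof.
case: (boolP [exists g, w g != 0]) => [/existsP h|]; first by right.
by rewrite negb_exists => /forallP h; left => f; have := h f; rewrite negbK => /eqP.
Qed.

Lemma H_to_good {R : realType} {d : nat} (C : 'M[R]_d) (h c : 'cV[R]_d) (p alpha beta : R) (k : 'I_d) :
  1 < p -> 0 < alpha -> 0 < beta -> (forall f, 0 < c f 0) ->
  desirable_classifiers C [set k] c p alpha beta h ->
  Good beta ((p - 1)^-1 * 2) k (fun f => (C *m h) f 0 / c f 0).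
Proof.
move=> p1 a0 b0 c0 [w0 Hopt].
have p0 : 0 < p by apply: lt_trans p1.
have pm1 : 0 < p - 1 by rewrite subr_gt0.
have s0 : (p - 1)^-1 * 2 != 0 by rewrite mulf_neq0 ?invr_eq0 ?gt_eqF ?pnatr_eq0.
case: (all0_or (fun f => (C *m h) f 0)) => [z|ex].
  rewrite /Good /= z mul0r powR0 //.
  rewrite big1 ?mulr0 // => f _; rewrite z mul0r powR0 //.
have [u [mu [mu0 u0 hu hs hd]]] := candidate C h c p alpha k p1 a0 c0 w0 ex.
apply/(hd beta b0)/Hopt; split; first by split => //; rewrite hs.
move=> e' fe'; rewrite cost_le //.
by have [] := opt_unique _ _ _ _ _ _ _ p1 mu0 c0 u0 hu hs e' fe'.
Qed.

Lemma good_to_H {R : realType} {d : nat} (C : 'M[R]_d) (h c : 'cV[R]_d) (p alpha beta : R) (k : 'I_d) :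
  1 < p -> 0 < alpha -> 0 < beta -> (forall f, 0 < c f 0) ->
  (forall f, 0 <= (C *m h) f 0) ->
  Good beta ((p - 1)^-1 * 2) k (fun f => (C *m h) f 0 / c f 0) ->
  desirable_classifiers C [set k] c p alpha beta h.
Proof.
move=> p1 a0 b0 c0 w0 G; split => // e [fe Hmin].
have p0 : 0 < p by apply: lt_trans p1.
case: (all0_or (fun f => (C *m h) f 0)) => [z|ex].
  case: fe => _; rewrite big1 => [|f _]; last by rewrite z mul0r.
  by rewrite leNgt a0.
have [u [mu [mu0 u0 hu hs hd]]] := candidate C h c p alpha k p1 a0 c0 w0 ex.
have fu : feasible C h alpha u by split => //; rewrite hs.
have := Hmin u fu; rewrite cost_le // => hle.
have [_ /(_ hle) ->] := opt_unique _ _ _ _ _ _ _ p1 mu0 c0 u0 hu hs e fe.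
exact/(hd beta b0).
Qed.

Definition Good1 {R : realType} {d : nat} (k : 'I_d) (x : 'I_d -> R) :=
  (forall f, x f = 0) \/ (forall f, f != k -> x f < x k).

Lemma cost1 {R : realType} {d : nat} (c e : 'cV[R]_d) :
  (forall f, 0 <= e f 0) -> (forall f, 0 < c f 0) ->
  cost c 1 e = \sum_f c f 0 * e f 0.
Proof.
move=> e0 c0; rewrite /cost invr1 powRr1.
  by apply: eq_bigr => f _; rewrite powRr1.
by apply: sumr_ge0 => f _; apply: mulr_ge0; [exact: ltW | exact: powR_ge0].
Qed.

Lemma sum_delta {R : realType} {d : nat} (G : 'I_d -> R -> R) (g : 'I_d) (a : R) :
  (forall i, G i 0 = 0) ->
  \sum_i G i ((\col_j (if j == g then a else 0) : 'cV[R]_d) i 0) = G g a.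
Proof.
move=> G0; rewrite (bigD1 g) //= big1 ?addr0 => [|i ig]; rewrite mxE.
  by rewrite eqxx.
by rewrite (negbTE ig).
Qed.

Lemma delta_ge0 {R : realType} {d : nat} (g : 'I_d) (a : R) : 0 <= a ->
  forall i, 0 <= (\col_j (if j == g then a else 0) : 'cV[R]_d) i 0.
Proof. by move=> a0 i; rewrite mxE; case: ifP. Qed.

Lemma H_to_good1 {R : realType} {d : nat} (C : 'M[R]_d) (h c : 'cV[R]_d) (alpha beta : R) (k : 'I_d) :
  0 < alpha -> 0 < beta -> (forall f, 0 < c f 0) ->
  desirable_classifiers C [set k] c 1 alpha beta h ->
  Good1 k (fun f => (C *m h) f 0 / c f 0).
Proof.
move=> a0 b0 c0 [w0 Hopt].
pose w := fun f => (C *m h) f 0.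
pose x := fun f => w f / c f 0.
have x0 : forall f, 0 <= x f by move=> f; apply: divr_ge0; [exact: w0 | exact: ltW].
have wx : forall f, w f = x f * c f 0 by move=> f; rewrite /x mulfVK ?gt_eqF.
case: (all0_or w) => [z|[g0 wg0]].
  by left => f; rewrite /= (z f : (C *m h) f 0 = 0) mul0r.
right => f fk /=; rewrite ltNge; apply/negP => hkf.
case: (@arg_maxP _ _ _ f xpredT x isT) => m _ hm.
pose g := if m == k then f else m.
have gk : g != k by rewrite /g; case: ifP => // /negbT.
have hg : forall i, x i <= x g.
  move=> i; rewrite /g; case: ifP => [/eqP mk|_]; last exact: hm.
  by apply: le_trans (hm i _) _ => //; rewrite mk.
have xg0 : 0 < x g.
  apply: lt_le_trans (hg g0); apply: divr_gt0 => //.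
  by rewrite lt_neqAle eq_sym wg0; exact: w0.
have wg : 0 < w g by rewrite wx mulr_gt0.
pose e := (\col_j (if j == g then alpha / w g else 0) : 'cV[R]_d).
have e0 : forall i, 0 <= e i 0.
  by apply: delta_ge0; apply: divr_ge0; apply: ltW.
have fe : feasible C h alpha e.
  split => //; rewrite (sum_delta (fun i v => w i * v)); last by move=> i; rewrite mulr0.
  by rewrite mulrC mulfVK ?gt_eqF.
have kg : (k == g) = false by apply/negbTE; rewrite eq_sym.
have := Hopt e; rewrite desirable_iff // mxE kg expr0n /=.
rewrite (sum_delta (fun i v => v ^+ 2)); last by move=> i; rewrite expr0n.
move=> H.
have : beta ^+ 2 * (alpha / w g) ^+ 2 <= 0.
  apply: H; split; first exact: fe.
  move=> e' [e'0 fe'].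
  rewrite !cost1 // (sum_delta (fun i v => c i 0 * v)); last by move=> i; rewrite mulr0.
  have key : alpha <= x g * \sum_f c f 0 * e' f 0.
    apply: le_trans fe' _; rewrite mulr_sumr; apply: ler_sum => i _.
    rewrite mulrA; apply: ler_wpM2r => //; rewrite -/(w i) wx.
    by apply: ler_wpM2r; [exact: ltW|].
  have eq : x g * (c g 0 * (alpha / w g)) = alpha.
    rewrite wx; field; apply/andP; split; rewrite gt_eqF //.
  by rewrite -(ler_pM2l xg0) eq.
have : 0 < beta ^+ 2 * (alpha / w g) ^+ 2.
  by apply: mulr_gt0; apply: exprn_gt0 => //; apply: divr_gt0.
by move=> /lt_le_trans h1 /h1; rewrite ltxx.
Qed.

Lemma good1_to_H {R : realType} {d : nat} (C : 'M[R]_d) (h c : 'cV[R]_d) (alpha beta : R) (k : 'I_d) :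
  0 < alpha -> 0 < beta -> beta <= 1 -> (forall f, 0 < c f 0) ->
  (forall f, 0 <= (C *m h) f 0) ->
  Good1 k (fun f => (C *m h) f 0 / c f 0) ->
  desirable_classifiers C [set k] c 1 alpha beta h.
Proof.
move=> a0 b0 b1 c0 w0 G; split => // e [[e0 fe] Hmin].
pose w := fun f => (C *m h) f 0.
pose x := fun f => w f / c f 0.
have x0 : forall f, 0 <= x f by move=> f; apply: divr_ge0; [exact: w0 | exact: ltW].
have wx : forall f, w f = x f * c f 0 by move=> f; rewrite /x mulfVK ?gt_eqF.
case: (all0_or w) => [z|[g wg]].
  move: fe; rewrite big1 => [|f _]; last by rewrite (z f : (C *m h) f 0 = 0) mul0r.
  by rewrite leNgt a0.
have wg0 : 0 < w g by rewrite lt_neqAle eq_sym wg; exact: w0.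
have xg0 : 0 < x g by apply: divr_gt0.
have hx : forall f, f != k -> x f < x k.
  case: G => [z|//]; have := z g; rewrite -/(x g) => xg.
  by move: xg0; rewrite xg ltxx.
have hxle : forall f, x f <= x k.
  by move=> f; case: (eqVneq f k) => [->//|fk]; apply: ltW; apply: hx.
have xk0 : 0 < x k by apply: lt_le_trans xg0 (hxle g).
have wk : 0 < w k by rewrite wx mulr_gt0.
pose es := (\col_j (if j == k then alpha / w k else 0) : 'cV[R]_d).
have es0 : forall i, 0 <= es i 0.
  by apply: delta_ge0; apply: divr_ge0; apply: ltW.
have fes : feasible C h alpha es.
  split => //; rewrite (sum_delta (fun i v => w i * v)); last by move=> i; rewrite mulr0.
  by rewrite mulrC mulfVK ?gt_eqF.
have := Hmin es fes; rewrite !cost1 // (sum_delta (fun i v => c i 0 * v));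
  last by move=> i; rewrite mulr0.
move=> hle.
pose T := fun i => (x k - x i) * c i 0 * e i 0.
have T0 : forall i, 0 <= T i.
  move=> i; apply: mulr_ge0 => //; apply: mulr_ge0; last exact: ltW.
  by rewrite subr_ge0.
have sT : \sum_i T i = x k * \sum_i c i 0 * e i 0 - \sum_i w i * e i 0.
  rewrite mulr_sumr -sumrB; apply: eq_bigr => i _; rewrite /T wx; ring.
have eq : x k * (c k 0 * (alpha / w k)) = alpha.
  rewrite wx; field; apply/andP; split; rewrite gt_eqF //.
have sT0 : \sum_i T i = 0.
  apply/eqP; rewrite eq_le; apply/andP; split; last by apply: sumr_ge0.
  rewrite sT subr_le0; apply: le_trans fe.
  by rewrite -eq; apply: ler_wpM2l => //; apply: ltW.
have ez : forall i, i != k -> e i 0 = 0.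
  move=> i ik; have := @psumr_eq0P _ _ xpredT T (fun i _ => T0 i) sT0 i isT.
  move/eqP; rewrite /T !mulf_eq0 subr_eq0 (gt_eqF (c0 i)) orbF => /orP[/eqP xe|/eqP //].
  by have := hx i ik; rewrite xe ltxx.
rewrite desirable_iff // (bigD1 k) //= big1 ?addr0 => [|i ik]; last by rewrite ez // expr0n.
have : 0 <= e k 0 ^+ 2 by apply: sqr_ge0.
have : beta ^+ 2 <= 1 by rewrite expr_le1 // ltW.
by nra.
Qed.

Lemma good1_conv {R : realType} {d : nat} (a b : R) (k : 'I_d) (x1 x2 : 'I_d -> R) :
  0 <= a -> 0 <= b -> a + b = 1 ->
  Good1 k x1 -> Good1 k x2 -> Good1 k (fun f => a * x1 f + b * x2 f).
Proof.
move=> a0 b0 ab [z1|s1] [z2|s2].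
- by left => f /=; rewrite z1 z2 !mulr0 addr0.
- case: (eqVneq b 0) => [b00|bn].
    by left => f /=; rewrite z1 b00 !mul0r mulr0 addr0.
  have bp : 0 < b by rewrite lt_neqAle eq_sym bn b0.
  right => f fk /=; rewrite !z1 !mulr0 !add0r ltr_pM2l //; exact: s2.
- case: (eqVneq a 0) => [a00|an].
    by left => f /=; rewrite z2 a00 !mul0r mulr0 addr0.
  have ap : 0 < a by rewrite lt_neqAle eq_sym an a0.
  right => f fk /=; rewrite !z2 !mulr0 !addr0 ltr_pM2l //; exact: s1.
- right => f fk /=; have h1 := s1 f fk; have h2 := s2 f fk.
  case: (eqVneq a 0) => [a00|an].
    have -> : b = 1 by lra.
    by rewrite a00 !mul0r !add0r !mul1r.
  have ap : 0 < a by rewrite lt_neqAle eq_sym an a0.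
  have : a * x1 f < a * x1 k by rewrite ltr_pM2l.
  have : b * x2 f <= b * x2 k by apply: ler_wpM2l => //; apply: ltW.
  lra.
Qed.

Lemma Good_ext {R : realType} {d : nat} (beta s : R) (k : 'I_d) (x y : 'I_d -> R) :
  (forall f, x f = y f) -> Good beta s k y -> Good beta s k x.
Proof.
by move=> e; rewrite /Good => G; under eq_bigr => f _ do rewrite e; rewrite e.
Qed.

Lemma Good1_ext {R : realType} {d : nat} (k : 'I_d) (x y : 'I_d -> R) :
  (forall f, x f = y f) -> Good1 k y -> Good1 k x.
Proof.
move=> e [z|s]; [by left => f; rewrite e z | by right => f fk; rewrite !e; exact: s].
Qed.

Theorem proposition3 (R : realType) (d : nat) (D U : {set 'I_d})
    (A : 'M[R]_d) (c : 'cV[R]_d) (alpha p beta : R) :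
  (0 < d)%N ->
  D :&: U = set0 -> D :|: U = [set: 'I_d] -> #|D| = 1%N ->
  is_dag A ->
  (forall f, 0 < c f 0) -> 0 < alpha -> 1 <= p <= 3 -> 0 < beta <= 1 ->
  forall (h1 h2 : 'cV[R]_d) (lam : R),
    desirable_classifiers (contribution A) D c p alpha beta h1 ->
    desirable_classifiers (contribution A) D c p alpha beta h2 ->
    0 <= lam <= 1 ->
    desirable_classifiers (contribution A) D c p alpha beta
      (lam *: h1 + (1 - lam) *: h2).
Proof.
move=> _ _ _ D1 _ c0 a0 /andP[p1 p3] /andP[b0 b1] h1 h2 lam H1 H2 /andP[l0 l1].
have /cards1P [k Dk] : #|D| == 1%N by rewrite D1.
subst D.
move: H1 H2; set C := contribution A => H1 H2.
have wE : forall f, (C *m (lam *: h1 + (1 - lam) *: h2)) f 0 =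
    lam * (C *m h1) f 0 + (1 - lam) * (C *m h2) f 0.
  by move=> f; rewrite mulmxDr -!scalemxAr !mxE.
have l1' : 0 <= 1 - lam by rewrite subr_ge0.
have w1 := H1.1; have w2 := H2.1.
have w0 : forall f, 0 <= (C *m (lam *: h1 + (1 - lam) *: h2)) f 0.
  by move=> f; rewrite wE; apply: addr_ge0; apply: mulr_ge0.
have xE : forall f, (C *m (lam *: h1 + (1 - lam) *: h2)) f 0 / c f 0 =
    lam * ((C *m h1) f 0 / c f 0) + (1 - lam) * ((C *m h2) f 0 / c f 0).
  by move=> f; rewrite wE mulrDl !mulrA.
have x10 : forall f, 0 <= (C *m h1) f 0 / c f 0.
  by move=> f; apply: divr_ge0; [exact: w1 | exact: ltW].
have x20 : forall f, 0 <= (C *m h2) f 0 / c f 0.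
  by move=> f; apply: divr_ge0; [exact: w2 | exact: ltW].
case: (eqVneq p 1) => [pe|pn].
  subst p.
  apply: good1_to_H => //.
  apply: (Good1_ext _ _ _ xE); apply: good1_conv => //; first by ring.
    exact: (H_to_good1 _ _ _ _ _ _ a0 b0 c0 H1).
  exact: (H_to_good1 _ _ _ _ _ _ a0 b0 c0 H2).
have pgt1 : 1 < p by rewrite lt_neqAle eq_sym pn p1.
have pm1 : 0 < p - 1 by rewrite subr_gt0.
have s1 : 1 <= (p - 1)^-1 * 2.
  have -> : (p - 1)^-1 * 2 = 1 + (3 - p) / (p - 1) by field; rewrite gt_eqF.
  rewrite lerDl; apply: divr_ge0; [by rewrite subr_ge0 | exact: ltW].
apply: good_to_H => //.
apply: (Good_ext _ _ _ _ _ xE); apply: good_conv => //.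
  exact: (H_to_good _ _ _ _ _ _ _ pgt1 a0 b0 c0 H1).
exact: (H_to_good _ _ _ _ _ _ _ pgt1 a0 b0 c0 H2).
Qed.
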